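(* Let $r,t\geq 2$ be integers and let $G_r$ be any graph on $r$ vertices. Let $G_{r,t}$ be the graph obtained from $G_r$ by attaching $t$ new pendant vertices to each vertex of $G_r$ (so $G_{r,t}$ has $r(t+1)$ vertices). Then $\rho(G_{r,t})=r$, and for every integer $n\geq t$, $\rho(G_{r,t}\square K_n)=rt$.
   Context: All graphs are finite and simple. A set $P\subseteq V(G)$ is a packing of $G$ if $N[u]\cap N[v]=\emptyset$ for all distinct $u,v\in P$, where $N[u]$ is the closed neighborhood of $u$; the packing number $\rho(G)$ is the maximum cardinality of a packing of $G$. $K_n$ is the complete graph on $n$ vertices. The Cartesian product $G\square H$ has vertex set $V(G)\times V(H)$, with $(g,h)$ adjacent to $(g',h')$ iff ($gg'\in E(G)$ and $h=h'$) or ($g=g'$ and $hh'\in E(H)$). *)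

(* Defs.v *)
From mathcomp Require Import all_boot.
Set Implicit Arguments. Unset Strict Implicit. Unset Printing Implicit Defensive.

Definition simple_graph (T : finType) (e : rel T) : Prop :=
  symmetric e /\ irreflexive e.

Definition closed_nbhd (T : finType) (e : rel T) (u : T) : {set T} :=
  [set v | (v == u) || e u v].

Definition is_packingb (T : finType) (e : rel T) (P : {set T}) : bool :=
  [forall u in P, forall v in P,
     (u != v) ==> (closed_nbhd e u :&: closed_nbhd e v == set0)].

Definition packing_number (T : finType) (e : rel T) : nat :=
  \max_(P : {set T} | is_packingb e P) #|P|.

Definition cart_prod (T1 T2 : finType) (e1 : rel T1) (e2 : rel T2) : rel (T1 * T2) :=
  fun x y => (e1 x.1 y.1 && (x.2 == y.2)) || ((x.1 == y.1) && e2 x.2 y.2).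

Definition complete_graph (n : nat) : rel 'I_n := fun i j => i != j.

(* G_{r,t}: vertex (i, None) is the original vertex i of G_r; (i, Some j),
   j < t, is the j-th pendant vertex attached to i. *)
Definition pendant_graph (r t : nat) (e : rel 'I_r) : rel ('I_r * option 'I_t) :=
  fun x y =>
    match x.2, y.2 with
    | None, None => e x.1 y.1
    | None, Some _ => x.1 == y.1
    | Some _, None => x.1 == y.1
    | Some _, Some _ => false
    end.
Arguments pendant_graph : clear implicits.
Arguments complete_graph : clear implicits.

(* Main.v *)
Require Import Defs.
From mathcomp Require Import all_boot.

Section Aux.

Lemma packingP (T : finType) (e : rel T) (P : {set T}) :
  (forall u v w, u \in P -> v \in P -> w \in closed_nbhd e u ->
     w \in closed_nbhd e v -> u = v) -> is_packingb e P.
Proof.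
move=> H; apply/forallP=> u; apply/implyP=> uP; apply/forallP=> v;
apply/implyP=> vP; apply/implyP=> neq; apply/eqP; apply/setP=> w.
rewrite inE in_set0; apply/negbTE; apply/andP=> -[hu hv].
by rewrite (H u v w) ?eqxx in neq.
Qed.

Lemma packingE (T : finType) (e : rel T) (P : {set T}) u v w :
  is_packingb e P -> u \in P -> v \in P -> w \in closed_nbhd e u ->
     w \in closed_nbhd e v -> u = v.
Proof.
move=> /forallP/(_ u)/implyP H uP vP hu hv.
move: (H uP) => /forallP/(_ v)/implyP/(_ vP)/implyP.
case: (eqVneq u v) => // neq /(_ isT)/eqP/setP/(_ w).
by rewrite inE in_set0 hu hv.
Qed.

Variables (r t : nat) (e : rel 'I_r).
Notation G := (pendant_graph r t e).

Lemma pend_root (x : 'I_r * option 'I_t) : (x.1, None) \in closed_nbhd G x.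
Proof.
case: x => a [j|]; rewrite inE /pendant_graph /= ?eqxx ?orbT //.
Qed.

Lemma pend_some (a : 'I_r) (j : 'I_t) w :
  w \in closed_nbhd G (a, Some j) -> w.1 = a.
Proof.
case: w => b [k|]; rewrite inE /pendant_graph /= ?orbF.
  by case/eqP.
by case/orP => [/eqP []|/eqP ->].
Qed.

Variable n : nat.
Notation H := (cart_prod G (complete_graph n)).

Lemma prod_same (w v : ('I_r * option 'I_t) * 'I_n) :
  w.1 = v.1 -> w \in closed_nbhd H v.
Proof.
case: w v => [w1 w2] [v1 v2] /= ->.
rewrite inE /cart_prod /complete_graph /= eqxx /=.
by case: (eqVneq v2 w2) => [->|]; rewrite ?eqxx ?orbT.
Qed.

Lemma prod_edge (w v : ('I_r * option 'I_t) * 'I_n) :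
  w.1 \in closed_nbhd G v.1 -> w.2 = v.2 -> w \in closed_nbhd H v.
Proof.
case: w v => [w1 w2] [v1 v2] /= h ->.
rewrite inE in h; case/orP: h => [/eqP ->|h]; first by rewrite inE eqxx.
by rewrite inE /cart_prod /= h eqxx orbT.
Qed.

Lemma prod_some (a : 'I_r) (j : 'I_t) (h : 'I_n) w :
  w \in closed_nbhd H ((a, Some j), h) ->
  w.1 = (a, Some j) \/ (w.1 = (a, None) /\ w.2 = h).
Proof.
case: w => [[b [k|]] m]; rewrite inE /cart_prod /pendant_graph /complete_graph /=.
  case/orP => [/eqP [-> -> _]|]; first by left.
  by case/andP => /eqP [-> ->] _; left.
case/orP => [/eqP [] //|]; case/orP => [/andP [/eqP -> /eqP ->]|/andP [/eqP [] //]].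
by right.
Qed.

End Aux.

Theorem mainTheorem2 (r t : nat) (e : rel 'I_r) :
  2 <= r -> 2 <= t -> simple_graph e ->
  packing_number (pendant_graph r t e) = r /\
  (forall n : nat, t <= n ->
     packing_number (cart_prod (pendant_graph r t e) (complete_graph n)) = r * t).
Proof.
move=> hr ht _.
have t0 : 0 < t by apply: leq_trans ht.
pose j0 : 'I_t := Ordinal t0.
split.
  apply/eqP; rewrite eqn_leq; apply/andP; split.
    apply/bigmax_leqP => P hP.
    rewrite -(card_in_imset (f := fst)); last first.
      move=> u v uP vP eq.
      apply: (@packingE _ _ _ _ _ (u.1, None) hP uP vP); first exact: pend_root.
      by rewrite eq; apply: pend_root.
    by rewrite -[X in _ <= X]card_ord max_card.
  pose P := [set (i, Some j0) | i : 'I_r].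
  have cP : #|P| = r.
    by rewrite card_imset ?card_ord // => a b [].
  rewrite -[X in X <= _]cP.
  apply: leq_bigmax_cond; apply: packingP => u v w.
  move=> /imsetP [a _ ->] /imsetP [b _ ->] /pend_some <- /pend_some <- //.
move=> n tn.
apply/eqP; rewrite eqn_leq; apply/andP; split.
  apply/bigmax_leqP => P hP.
  pose f := fun u : ('I_r * option 'I_t) * 'I_n => (u.1.1, odflt j0 u.1.2).
  rewrite -(card_in_imset (f := f)); last first.
    move=> [[a s] h] [[b s'] h'] uP vP; rewrite /f /= => -[eab]; subst b.
    case: s uP => [j|] uP; case: s' vP => [k|] vP /=.
    - move=> ejk; subst k.
      apply: (@packingE _ _ _ _ _ ((a, Some j), h') hP uP vP).
        exact: prod_same.
      exact: prod_same.
    - move=> _; apply: (@packingE _ _ _ _ _ ((a, None), h) hP uP vP).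
        apply: prod_edge => //=; exact: (@pend_root _ _ _ (a, Some j)).
      exact: prod_same.
    - move=> _; apply: (@packingE _ _ _ _ _ ((a, None), h') hP uP vP).
        exact: prod_same.
      apply: prod_edge => //=; exact: (@pend_root _ _ _ (a, Some k)).
    - move=> _; apply: (@packingE _ _ _ _ _ ((a, None), h') hP uP vP).
        exact: prod_same.
      exact: prod_same.
  have := max_card [set f x | x in P]; by rewrite card_prod !card_ord.
pose g := fun x : 'I_r * 'I_t => ((x.1, Some x.2), widen_ord tn x.2).
pose P := [set g x | x : 'I_r * 'I_t].
have -> : r * t = #|P|.
  rewrite card_imset ?card_prod ?card_ord //.
  by move=> [a j] [b k] [-> ->].
apply: leq_bigmax_cond; apply: packingP => u v w.
move=> /imsetP [[a j] _ ->] /imsetP [[b k] _ ->].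
rewrite /g /= => /prod_some hu /prod_some hv.
case: hu hv => [->|[-> ->]] [|[]].
- by move=> [-> ->].
- by [].
- by [].
- move=> [->] /(congr1 val) /= /val_inj ->.
  done.
Qed.
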